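(* For $m\ge 1$, let $\mathbf{D}_m$ be the $m\times m$ symmetric tridiagonal matrix with diagonal entries $d_{kk}=4k^2-6k+\tfrac52$ ($1\le k\le m$), off-diagonal entries $d_{k,k+1}=d_{k+1,k}=-k(2k-1)$ ($1\le k\le m-1$), and all other entries zero. Then for every $m\in\mathbb{N}$ its smallest eigenvalue satisfies $$\lambda_{\min}(\mathbf{D}_m)<\frac{1}{\ln\big(m+\frac12\big)}.$$ *)

(* Defs.v *)
From HB Require Import structures.
From mathcomp Require Import all_boot all_order all_algebra.
From mathcomp Require Import all_classical all_reals all_analysis.
Set Implicit Arguments. Unset Strict Implicit. Unset Printing Implicit Defensive.
Import Order.TTheory GRing.Theory Num.Theory.
Local Open Scope ring_scope.

(* The m x m symmetric tridiagonal matrix D_m.  Row/column index i : 'I_m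
   corresponds to the 1-based index k = i+1.
   d_{kk} = 4k^2 - 6k + 5/2,  d_{k,k+1} = d_{k+1,k} = -k(2k-1). *)
Definition Dmat (R : realType) (m : nat) : 'M[R]_m :=
  \matrix_(i < m, j < m)
    if i == j :> nat then
      let k : R := (i.+1)%:R in 4 * k ^+ 2 - 6 * k + 5 / 2
    else if j == i.+1 :> nat then
      let k : R := (i.+1)%:R in - (k * (2 * k - 1))
    else if i == j.+1 :> nat then
      let k : R := (j.+1)%:R in - (k * (2 * k - 1))
    else 0.

Definition is_min_eigenvalue (R : realType) (m : nat) (A : 'M[R]_m) (l : R) :=
  eigenvalue A l /\ (forall mu : R, eigenvalue A mu -> l <= mu).

(* Main.v *)
Require Import Defs.
From HB Require Import structures.
From mathcomp Require Import all_boot all_order all_algebra.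
From mathcomp Require Import all_classical all_reals all_analysis.
From mathcomp Require Import ring lra zify.
From Stdlib Require Import Lia.
Import Order.TTheory GRing.Theory Num.Theory.
Import numFieldNormedType.Exports.
Local Open Scope ring_scope.

Section Spec.
Local Open Scope classical_set_scope.
Variable R : realType.

Lemma cont_sum (T : topologicalType) (I : Type) (r : seq I) (F : I -> T -> R) :
  (forall i, continuous (F i)) -> continuous (fun x => \sum_(i <- r) F i x).
Proof.
elim: r => [|a r IH] HF x.
  under eq_fun do rewrite big_nil. exact: cst_continuous.
under eq_fun do rewrite big_cons.
apply: (@continuousD _ _ _ (F a) (fun x => \sum_(i <- r) F i x)).
  exact: HF.
exact: IH.
Qed.

Variable n : nat.
Implicit Types (A : 'M[R]_n) (u v w x y : 'rV[R]_n).
Definition bf (A : 'M[R]_n) (v w : 'rV[R]_n) : R :=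
  \sum_i \sum_j v ord0 i * A i j * w ord0 j.
Definition dt (v w : 'rV[R]_n) : R := \sum_i v ord0 i * w ord0 i.

Lemma bf_cont A : continuous (fun v => bf A v v).
Proof.
apply: cont_sum => i; apply: cont_sum => j.
move=> v0; apply: (continuousM (s:=fun v : 'rV[R]_n => v ord0 i * A i j) (t:=fun v => v ord0 j)).
  apply: (continuousM (s:=fun v : 'rV[R]_n => v ord0 i) (t:=fun v => A i j)).
    exact: coord_continuous.
  exact: cst_continuous.
exact: coord_continuous.
Qed.

Lemma dt_cont : continuous (fun v => dt v v).
Proof.
apply: cont_sum => i.
move=> v0; apply: (continuousM (s:=fun v : 'rV[R]_n => v ord0 i) (t:=fun v => v ord0 i));
 exact: coord_continuous.
Qed.


Lemma bfDl A v w u : bf A (v + w) u = bf A v u + bf A w u.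
Proof.
rewrite /bf -big_split /=; apply: eq_bigr => i _.
rewrite -big_split /=; apply: eq_bigr => j _; rewrite !mxE; ring.
Qed.
Lemma bfDr A v w u : bf A u (v + w) = bf A u v + bf A u w.
Proof.
rewrite /bf -big_split /=; apply: eq_bigr => i _.
rewrite -big_split /=; apply: eq_bigr => j _; rewrite !mxE; ring.
Qed.
Lemma bfZl A k v u : bf A (k *: v) u = k * bf A v u.
Proof.
rewrite /bf mulr_sumr; apply: eq_bigr => i _.
rewrite mulr_sumr; apply: eq_bigr => j _; rewrite !mxE; ring.
Qed.
Lemma bfZr A k v u : bf A u (k *: v) = k * bf A u v.
Proof.
rewrite /bf mulr_sumr; apply: eq_bigr => i _.
rewrite mulr_sumr; apply: eq_bigr => j _; rewrite !mxE; ring.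
Qed.
Lemma dtDl v w u : dt (v + w) u = dt v u + dt w u.
Proof. rewrite /dt -big_split /=; apply: eq_bigr => i _; rewrite !mxE; ring. Qed.
Lemma dtDr v w u : dt u (v + w) = dt u v + dt u w.
Proof. rewrite /dt -big_split /=; apply: eq_bigr => i _; rewrite !mxE; ring. Qed.
Lemma dtZl k v u : dt (k *: v) u = k * dt v u.
Proof. rewrite /dt mulr_sumr; apply: eq_bigr => i _; rewrite !mxE; ring. Qed.
Lemma dtZr k v u : dt u (k *: v) = k * dt u v.
Proof. rewrite /dt mulr_sumr; apply: eq_bigr => i _; rewrite !mxE; ring. Qed.

Lemma bf_expand A v w t : bf A (v + t *: w) (v + t *: w) =
  bf A v v + t * (bf A v w + bf A w v) + t ^+ 2 * bf A w w.
Proof. rewrite !(bfDl, bfDr, bfZl, bfZr); ring. Qed.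

Lemma dt_expand v w t : dt (v + t *: w) (v + t *: w) =
  dt v v + t * (dt v w + dt w v) + t ^+ 2 * dt w w.
Proof. rewrite !(dtDl, dtDr, dtZl, dtZr); ring. Qed.

Lemma bf_scale A s u : bf A (s *: u) (s *: u) = s ^+ 2 * bf A u u.
Proof. rewrite !(bfZl, bfZr); ring. Qed.

Lemma dt_scale s u : dt (s *: u) (s *: u) = s ^+ 2 * dt u u.
Proof. rewrite !(dtZl, dtZr); ring. Qed.

Lemma dtC v w : dt v w = dt w v.
Proof. by apply: eq_bigr => i _; rewrite mulrC. Qed.

Lemma bf_sym A v w : (forall i j, A i j = A j i) -> bf A v w = bf A w v.
Proof.
move=> hA; rewrite /bf exchange_big; apply: eq_bigr => i _.
apply: eq_bigr => j _; rewrite hA; ring.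
Qed.

Lemma bf_mul A v w : bf A v w = dt (v *m A) w.
Proof.
rewrite /bf /dt exchange_big; apply: eq_bigr => j _.
by rewrite !mxE mulr_suml.
Qed.

Lemma dtB x y k w : dt (x - k *: y) w = dt x w - k * dt y w.
Proof.
rewrite /dt mulr_sumr -sumrB; apply: eq_bigr => i _.
rewrite !mxE; ring.
Qed.

Lemma dt_ge0 u : 0 <= dt u u.
Proof. by apply: sumr_ge0 => i _; rewrite -expr2 sqr_ge0. Qed.

Lemma dt_eq0 u : dt u u = 0 -> u = 0.
Proof.
move=> h; apply/matrixP => i j; rewrite ord1 mxE.
have /psumr_eq0P H : \sum_i u ord0 i * u ord0 i = 0 by exact: h.
have := H (fun k _ => ltac:(rewrite -expr2 sqr_ge0 //)) j isT.
by rewrite -expr2 => /eqP; rewrite sqrf_eq0 => /eqP.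
Qed.

Lemma quad0 (G H : R) : (forall t : R, 0 <= 2 * t * G + t ^+ 2 * H) -> G = 0.
Proof.
move=> h; set k := `|H| + 1.
have k0 : 0 < k by rewrite /k ltr_wpDl.
have := h (- G / k).
have -> : 2 * (- G / k) * G + (- G / k) ^+ 2 * H = G ^+ 2 * (H - 2 * k) / k ^+ 2.
  by field; rewrite gt_eqF.
rewrite pmulr_lge0 ?invr_gt0 ?exprn_gt0 //.
have hH : H <= `|H| by rewrite ler_norm.
move=> hh; apply/eqP; rewrite -sqrf_eq0 eq_le sqr_ge0 andbT.
have h1 : 0 <= G ^+ 2 * (`|H| - H) by rewrite mulr_ge0 ?sqr_ge0 ?subr_ge0.
have h2 : 0 <= G ^+ 2 * `|H| by rewrite mulr_ge0 ?sqr_ge0.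
rewrite /k in hh; lra.
Qed.


Lemma min_eig A : (0 < n)%N -> (forall i j, A i j = A j i) ->
  exists l, is_min_eigenvalue A l /\ forall v, l * dt v v <= bf A v v.
Proof.
move=> hn hA.
pose S := [set v : 'rV[R]_n | dt v v = 1].
have S0 : S !=set0.
  exists (delta_mx 0 (Ordinal hn)); rewrite /S /= /dt (bigD1 (Ordinal hn)) //=.
  rewrite big1 ?addr0 ?mxE ?eqxx ?mulr1 // => i hi; rewrite !mxE (negbTE hi).
  by rewrite andbF mulr0.
have Scl : closed S.
  have := (continuous_closedP (fun v : 'rV[R]_n => dt v v)).1 (@dt_cont) _ (@closed_eq R 1).
  by [].
have Sco : compact S.
  have BB := (@rV_compact R n (fun=> `[(-1:R), 1]%classic) (fun=> @segment_compact R (-1) 1)). apply: (subclosed_compact Scl BB).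
  move=> v /= hv i; rewrite in_itv /=.
  have : v ord0 i ^+ 2 <= 1.
    rewrite -hv /dt (bigD1 i) //= expr2 lerDl; apply: sumr_ge0 => k _.
    by rewrite -expr2 sqr_ge0.
  move=> h; apply/andP; split; nra.
have [c cS cmin] := EVT_min_rV S0 Sco (continuous_subspaceT (A:=S) (bf_cont A)).
rewrite inE /S /= in cS.
set l := bf A c c.
have lb : forall u, l * dt u u <= bf A u u.
  move=> u; have [u0|] := eqVneq (dt u u) 0.
    rewrite (dt_eq0 _ u0).
    have -> : (0 : 'rV[R]_n) = 0 *: 0 by rewrite scale0r.
    by rewrite dt_scale bf_scale expr0n /= !mul0r mulr0.
  move=> un0; have up : 0 < dt u u by rewrite lt_def un0 dt_ge0.
  set s := (Num.sqrt (dt u u))^-1.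
  have s2 : s ^+ 2 * dt u u = 1.
    by rewrite /s exprVn sqr_sqrtr ?dt_ge0 // mulVf.
  have : s *: u \in S by rewrite inE /S /= dt_scale.
  move/cmin; rewrite -/l bf_scale => h.
  rewrite [X in _ <= X](_ : _ = s ^+ 2 * bf A u u * dt u u); last by rewrite mulrAC s2 mul1r.
  by rewrite ler_pM2r.
have G0 : forall w, bf A c w = l * dt c w.
  move=> w; apply/eqP; rewrite -subr_eq0; apply/eqP.
  apply: (@quad0 _ (bf A w w - l * dt w w)) => t.
  have := lb (c + t *: w); rewrite bf_expand dt_expand cS -/l (bf_sym _ _ _ hA) (dtC w c).
  lra.
have ceig : c *m A = l *: c.
  apply/eqP; rewrite -subr_eq0; apply/eqP; apply: dt_eq0.
  by rewrite dtB -bf_mul G0 subrr.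
exists l; split => //; split.
  apply/eigenvalueP; exists c => //; apply/eqP => c0.
  by move: cS; rewrite c0 /dt big1 ?mxE => [/eqP|i _]; rewrite ?mxE ?mulr0 // eq_sym oner_eq0.
move=> mu /eigenvalueP [u hu un0].
have up : 0 < dt u u.
  rewrite lt_def dt_ge0 andbT; apply/eqP => /dt_eq0 h; by rewrite h eqxx in un0.
have := lb u; rewrite bf_mul hu dtZl.
by rewrite ler_pM2r.
Qed.

End Spec.

Section Conc.
Variable R : realType.

Lemma ln_le_sub1 (z : R) : 0 < z -> ln z <= z - 1.
Proof.
move=> z0; have := expR_ge1Dx (ln z); rewrite lnK ?posrE //; lra.
Qed.

Lemma ln_diff (x y : R) : 0 < x -> 0 < y -> ln y - ln x <= (y - x) / x.
Proof.
move=> x0 y0; rewrite -ln_div ?posrE //.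
have := ln_le_sub1 _ (divr_gt0 y0 x0).
have -> : (y - x) / x = y / x - 1 by field; rewrite gt_eqF.
by [].
Qed.

Fixpoint cc (k : nat) : R :=
  if k is k'.+1 then cc k' * ((2 * k'%:R + 1) / (2 * k'%:R + 2)) else 1.
Definition aa k := cc k ^+ 2.
Definition AA n := \sum_(j < n) aa j.

Lemma aaS k : aa k.+1 = aa k * ((2 * k%:R + 1) ^+ 2 / (2 * k%:R + 2) ^+ 2).
Proof.
have hk : 0 <= k%:R :> R by rewrite ler0n.
rewrite /aa /=; field; rewrite gt_eqF //; lra.
Qed.

Lemma aa_gt0 k : 0 < aa k.
Proof.
elim: k => [|k IH]; first by rewrite /aa /= expr1n.
have hk : 0 <= k%:R :> R by rewrite ler0n.
rewrite aaS mulr_gt0 // divr_gt0 // exprn_gt0 //; lra.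
Qed.

Lemma Pcl (x : R) n : \sum_(j < n) aa j * (x - j%:R) * (2 * j%:R + 1/2) =
  2 * x * n%:R ^+ 2 * aa n - (n%:R ^+ 3 - 3/4 * n%:R ^+ 2) * aa n + AA n / 16.
Proof.
elim: n => [|n IH]; first by rewrite big_ord0 /AA big_ord0 /aa /=; ring.
have hk : 0 <= n%:R :> R by rewrite ler0n.
rewrite big_ord_recr /= IH /AA big_ord_recr /= -/(AA n) aaS mulrS.
field; rewrite gt_eqF //; lra.
Qed.

Lemma Tcl (x : R) n : \sum_(j < n) aa j * (x - j%:R) ^+ 2 =
  x ^+ 2 * AA n - 2 * x * (n%:R ^+ 2 * aa n - AA n / 4)
  + (n%:R ^+ 3 / 2 - 5/8 * n%:R ^+ 2) * aa n + AA n / 32.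
Proof.
elim: n => [|n IH]; first by rewrite big_ord0 /AA big_ord0 /aa /=; ring.
have hk : 0 <= n%:R :> R by rewrite ler0n.
rewrite big_ord_recr /= IH /AA big_ord_recr /= -/(AA n) aaS mulrS.
field; rewrite gt_eqF //; lra.
Qed.


Lemma AA_lb n : (0 < n)%N ->
  (n%:R + 1/2) * (ln (n%:R + 1/2) + 2) * aa n <= AA n.
Proof.
elim: n => [//|n IH] _.
case: n IH => [|n] IH.
  rewrite /AA big_ord1 /aa /= !expr1n.
  have h := ln_le_sub1 (1%:R + 1/2 : R) ltac:(lra).
  have h2 : 0 <= ln (1%:R + 1/2 : R) by apply: ln_ge0; lra.
  rewrite -[(1%:R : R)]/(1 : R) in h h2 *.
  have -> : (1 * ((2 * 0%:R + 1) / (2 * 0%:R + 2))) ^+ 2 = (1/4 : R).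
    by rewrite /= mulr0 !add0r; field.
  lra.
have {}IH := IH isT.
set y : R := n.+1%:R.
have y1 : 1 <= y by rewrite /y ler1n.
set x := y + 1/2.
have -> : (n.+2)%:R + 1/2 = x + 1 by rewrite /x /y mulrS; ring.
set l := ln x; set l' := ln (x + 1).
have l0 : 0 <= l by apply: ln_ge0; rewrite /x; lra.
have h1 : (l' - l) * x <= 1.
  rewrite -ler_pdivlMr; last by rewrite /x; lra.
  have := ln_diff x (x + 1) ltac:(rewrite /x; lra) ltac:(rewrite /x; lra).
  by rewrite (_ : x + 1 - x = 1) //; ring.
have c0 : 0 <= (y + 3/2) * (2 * y + 1) * 2 by apply: mulr_ge0 => //; apply: mulr_ge0; lra.
have h2 := ler_wpM2l c0 h1.
have yl : 0 <= y * l by apply: mulr_ge0 => //; lra.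
have K : (x + 1) * (l' + 2) * (2 * y + 1) ^+ 2 <= (x * (l + 2) + 1) * (2 * y + 2) ^+ 2.
  rewrite /x in h2 *; rewrite -subr_ge0.
  have -> : ((y + 1 / 2) * (l + 2) + 1) * (2 * y + 2) ^+ 2 - (y + 1 / 2 + 1) * (l' + 2) * (2 * y + 1) ^+ 2
    = ((y + 3 / 2) * (2 * y + 1) * 2 * 1 - (y + 3 / 2) * (2 * y + 1) * 2 * ((l' - l) * (y + 1 / 2)))
      + (y * l + l / 2 + 2 * y + 2) by field.
  apply: addr_ge0; first by rewrite subr_ge0.
  clear -yl l0 y1; clearbody l x y; lra.
have al := aa_gt0 n.+1.
rewrite /AA big_ord_recr /= -/(AA n.+1) aaS -/y.
set r := (2 * y + 1) ^+ 2 / (2 * y + 2) ^+ 2.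
have K' : (x + 1) * (l' + 2) * r <= x * (l + 2) + 1.
  rewrite /r mulrA ler_pdivrMr //; last by rewrite exprn_gt0 //; lra.
have -> : (x + 1) * (l' + 2) * (aa n.+1 * r) = aa n.+1 * ((x + 1) * (l' + 2) * r) by ring.
apply: (le_trans (ler_wpM2l (ltW al) K')).
rewrite -/y -/x -/l in IH; lra.
Qed.


Lemma ineq_real (M L a A : R) : 1 <= M -> 0 < L -> L <= M -> 0 < a ->
  (M + 1/2) * (L + 2) * a <= A ->
  L * ((M ^+ 3 + 3/4 * M ^+ 2) * a + A / 16) <
  (M ^+ 2 + M / 2 + 1/32) * A - (3/2 * M ^+ 3 + 5/8 * M ^+ 2) * a.
Proof.
move=> M1 L0 LM a0 hA.
set c1 := M ^+ 2 + M / 2 + 1/32 - L / 16.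
have c10 : 0 <= c1.
  have : L <= M ^+ 2 by rewrite expr2; nra.
  rewrite /c1; lra.
have hB := ler_wpM2l c10 hA.
set K := 3/2 * M ^+ 3 + 5/8 * M ^+ 2 + L * (M ^+ 3 + 3/4 * M ^+ 2).
have poly : 0 < c1 * ((M + 1/2) * (L + 2)) - K.
  have h3 : 0 <= (M + 1/2) * L * (M - L) by rewrite mulr_ge0 ?mulr_ge0 //; lra.
  have h4 : 0 <= M * M * L by rewrite !mulr_ge0 //; lra.
  have h5 : 0 <= (M - 1) * L by rewrite mulr_ge0 //; lra.
  have h6 : 0 <= M * M * M by rewrite !mulr_ge0 //; lra.
  have h7 : 0 <= M * M by rewrite !mulr_ge0 //; lra.
  have h8 : 0 <= M * L by rewrite !mulr_ge0 //; lra.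
  rewrite /c1 /K; clearbody c1 K; nra.
have -> : (M ^+ 2 + M / 2 + 1/32) * A - (3/2 * M ^+ 3 + 5/8 * M ^+ 2) * a =
   L * ((M ^+ 3 + 3/4 * M ^+ 2) * a + A / 16) + (c1 * A - K * a) by rewrite /c1 /K; field.
rewrite ltrDl.
have := mulr_gt0 a0 poly.
have -> : a * (c1 * ((M + 1 / 2) * (L + 2)) - K) = c1 * ((M + 1 / 2) * (L + 2) * a) - K * a by ring.
move=> h; apply: (lt_le_trans h); rewrite lerD2r; exact: hB.
Qed.

End Conc.

Section Col.
Variable R : realType.

Definition EE (i j : nat) : R :=
    if i == j :> nat then
      let k : R := (i.+1)%:R in 4 * k ^+ 2 - 6 * k + 5 / 2
    else if j == i.+1 :> nat then
      let k : R := (i.+1)%:R in - (k * (2 * k - 1))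
    else if i == j.+1 :> nat then
      let k : R := (j.+1)%:R in - (k * (2 * k - 1))
    else 0.
Definition dd (i : nat) : R := let k : R := (i.+1)%:R in 4 * k ^+ 2 - 6 * k + 5 / 2.
Definition ww (i : nat) : R := let k : R := (i.+1)%:R in k * (2 * k - 1).

Lemma Dmat_EE m (i j : 'I_m) : Dmat R m i j = EE i j.
Proof. by rewrite mxE. Qed.

Lemma Esplit (i j : nat) (x : R) : x * EE i j =
  (if i == j then x * dd i else 0) + (if j == i.+1 then - (x * ww i) else 0)
  + (if i == j.+1 then - (x * ww j) else 0).
Proof.
rewrite /EE /dd /ww.
case: (eqVneq i j) => [<-|ne].
  rewrite (_ : (i == i.+1) = false); last by apply/eqP; lia.
  by rewrite !addr0.
case: (eqVneq j i.+1) => [e|ne2].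
  rewrite (_ : (i == j.+1) = false); last by apply/eqP; lia.
  by rewrite add0r addr0 mulrN.
by case: (eqVneq i j.+1) => [e|ne3]; rewrite ?mulrN ?mulr0 !add0r.
Qed.

Lemma sum_eq (m t : nat) (g : nat -> R) :
  \sum_(i < m) (if (i : nat) == t then g i else 0) = if (t < m)%N then g t else 0.
Proof. by rewrite -big_mkcond big_ord1_eq. Qed.

Lemma sum_S1 (m j : nat) (g : nat -> R) :
  \sum_(i < m) (if j == (i : nat).+1 then g i else 0) =
  if j is k.+1 then (if (k < m)%N then g k else 0) else 0.
Proof.
case: j => [|k]; first by rewrite big1.
under eq_bigr do rewrite eqSS eq_sym.
exact: sum_eq.
Qed.

Definition VV (m i : nat) : R := cc R i * (m%:R - i%:R).

Lemma colD m (j : 'I_m) : \sum_(i < m) VV m i * Dmat R m i j = cc R j * (2 * j%:R + 1/2).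
Proof.
under eq_bigr do rewrite Dmat_EE Esplit.
rewrite !big_split /= (sum_eq m j (fun i => VV m i * dd i)) ltn_ord.
rewrite (sum_S1 m j (fun i => - (VV m i * ww i))).
rewrite (sum_eq m j.+1 (fun i => - (VV m i * ww j))).
have hj := ltn_ord j.
have -> : (if (j.+1 < m)%N then - (VV m j.+1 * ww j) else 0) = - (VV m j.+1 * ww j).
  case: ifP => // /negbT; rewrite -leqNgt => h.
  have hm' : m = j.+1 by apply/eqP; rewrite eqn_leq h hj.
  rewrite /VV; have -> : (m%:R : R) = (j.+1)%:R by apply: (congr1 (fun k : nat => k%:R : R)).
  by rewrite subrr mulr0 mul0r oppr0.
move: (nat_of_ord j) hj => {}j hj.
rewrite /VV /dd /ww.
case: j hj => [|k] hk /=.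
  rewrite !mulr0 !add0r subr0 addr0 !mulr1 !mul1r.
  by field.
rewrite (_ : (k < m)%N = true); last by apply/idP; lia.
rewrite !mulrS.
have h0 : 0 <= k%:R :> R by rewrite ler0n.
field; rewrite ?gt_eqF //; lra.
Qed.

End Col.

Theorem proposition4p5 (R : realType) (m : nat) (hm : (0 < m)%N) :
  exists l : R, is_min_eigenvalue (Dmat R m) l /\
    l < (ln (m%:R + 2^-1 : R))^-1.
Proof.
have sym : forall i j : 'I_m, Dmat R m i j = Dmat R m j i.
  move=> i j; rewrite !Dmat_EE /EE.
  move: (nat_of_ord i) (nat_of_ord j) => a b.
  case: (eqVneq a b) => [<-|nab]; first by [].
  case: (eqVneq b a.+1) => [->|n1].
    by rewrite (_ : (a == a.+2) = false) //; apply/eqP; lia.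
  by case: (eqVneq a b.+1).
have [l [[heig hmin] lb]] := @min_eig R m (Dmat R m) hm sym.
exists l; split => //.
pose v := \row_(i < m) VV R m i.
have := lb v.
have -> : bf _ _ (Dmat R m) v v = \sum_(j < m) aa R j * (m%:R - j%:R) * (2 * j%:R + 1/2).
  rewrite bf_mul /dt; apply: eq_bigr => j _.
  rewrite !mxE.
  under eq_bigr do rewrite mxE.
  rewrite colD /VV /aa; ring.
have -> : dt _ _ v v = \sum_(j < m) aa R j * (m%:R - j%:R) ^+ 2.
  rewrite /dt; apply: eq_bigr => j _; rewrite !mxE /VV /aa; ring.
rewrite Pcl Tcl.
have ha := aa_gt0 R m.
have hA := AA_lb R m hm.
set M : R := m%:R in hA *.
set a := aa R m in ha hA *.
set A := AA R m in hA *.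
have M1 : 1 <= M by rewrite /M ler1n.
rewrite div1r in hA.
set L := ln (M + 2^-1) in hA *.
have L0 : 0 < L by apply: ln_gt0; lra.
have LM : L <= M.
  have := ln_le_sub1 R (M + 2^-1) ltac:(lra); rewrite -/L; lra.
have key := @ineq_real R M L a A M1 L0 LM ha.
rewrite div1r in key.
have {key} := key hA.
have -> : 2 * M * M ^+ 2 * a - (M ^+ 3 - 3 / 4 * M ^+ 2) * a + A / 16
  = (M ^+ 3 + 3 / 4 * M ^+ 2) * a + A / 16 by ring.
have -> : M ^+ 2 * A - 2 * M * (M ^+ 2 * a - A / 4) + (M ^+ 3 / 2 - 5 / 8 * M ^+ 2) * a + A / 32
  = (M ^+ 2 + M / 2 + 1 / 32) * A - (3 / 2 * M ^+ 3 + 5 / 8 * M ^+ 2) * a by field.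
set P := (M ^+ 3 + 3 / 4 * M ^+ 2) * a + A / 16.
set T := (M ^+ 2 + M / 2 + 1 / 32) * A - (3 / 2 * M ^+ 3 + 5 / 8 * M ^+ 2) * a.
move=> hLP hlT.
have A0 : 0 < A.
  apply: lt_le_trans hA; apply: mulr_gt0 => //; apply: mulr_gt0; lra.
have P0 : 0 < P.
  rewrite /P; apply: ltr_pwDr; first by apply: divr_gt0 => //; lra.
  apply: mulr_ge0; last lra.
  have : 0 <= M ^+ 3 by apply: exprn_ge0; lra.
  have : 0 <= M ^+ 2 by apply: exprn_ge0; lra.
  lra.
have T0 : 0 < T.
  apply: le_lt_trans hLP; apply: mulr_ge0; lra.
rewrite -(ltr_pM2r L0) mulVf ?gt_eqF //.
rewrite -(ltr_pM2r T0) mul1r.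
apply: le_lt_trans hLP.
rewrite mulrAC (mulrC L); apply: ler_wpM2r; lra.
Qed.
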